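(* Let $(\Omega,\mathcal{H},\mathbb{E})$ be a nonlinear expectation space and let $\{X_\alpha\}_{\alpha\in\mathcal{A}}$ be a family of $\mathbb{R}^d$-valued random variables on it (so $\varphi(X_\alpha)\in\mathcal{H}$ for $\varphi\in C_b(\mathbb{R}^d)$). Let $(\bar\Omega,\bar{\mathcal{H}},\bar{\mathbb{E}})$ be a sublinear expectation space, $l>0$ fixed, and $\bar X=(\bar X_1,\dots,\bar X_d)$ with $\bar X_i\in\bar{\mathcal{H}}$ and $\psi(\bar X)\in\bar{\mathcal{H}}$ for every Borel $\psi:\mathbb{R}^d\to\mathbb{R}$ with $|\psi(x)|\le c(1+|x|^l)$. Suppose \[ \mathbb{E}[\varphi(X_\alpha)]-\mathbb{E}[\psi(X_\alpha)]\le\bar{\mathbb{E}}[\varphi(\bar X)-\psi(\bar X)]\quad\text{for all }\alpha\in\mathcal{A},\ \varphi,\psi\in C_b(\mathbb{R}^d). \] Then the family of distributions $\{\mathbb{F}_{X_\alpha}\}_{\alpha\in\mathcal{A}}$, $\mathbb{F}_{X_\alpha}[\varphi]:=\mathbb{E}[\varphi(X_\alpha)]$ for $\varphi\in C_b(\mathbb{R}^d)$, is weakly compact: every sequence $\{\mathbb{F}_{X_{\alpha_n}}\}_{n\ge1}$ has a subsequence $\{\mathbb{F}_{X_{\alpha_{n_i}}}\}_{i\ge1}$ such that $\{\mathbb{F}_{X_{\alpha_{n_i}}}[\varphi]\}_{i\ge1}$ is Cauchy for every $\varphi\in C_b(\mathbb{R}^d)$.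
   Context: A nonlinear expectation space $(\Omega,\mathcal{H},\mathbb{E})$: $\mathcal{H}$ is a linear space of real functions on a set $\Omega$ with $1\in\mathcal{H}$ and $|\xi|\in\mathcal{H}$ for $\xi\in\mathcal{H}$; $\mathbb{E}:\mathcal{H}\to\mathbb{R}$ satisfies $\mathbb{E}[c]=c$ for constants and $\mathbb{E}[X]\ge\mathbb{E}[Y]$ when $X\ge Y$. A sublinear expectation space is such a space where moreover $\mathbb{E}[X+Y]\le\mathbb{E}[X]+\mathbb{E}[Y]$ and $\mathbb{E}[\lambda X]=\lambda\mathbb{E}[X]$ for $\lambda\ge0$. $C_b(\mathbb{R}^d)$ denotes bounded continuous real functions on $\mathbb{R}^d$. *)

(* Defs.v *)
From HB Require Import structures.
From mathcomp Require Import all_boot all_order all_algebra.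
From mathcomp Require Import all_classical all_reals all_analysis.
Set Implicit Arguments. Unset Strict Implicit. Unset Printing Implicit Defensive.
Import Order.TTheory GRing.Theory Num.Theory.
Import numFieldNormedType.Exports.
Local Open Scope classical_set_scope.
Local Open Scope ring_scope.

(* R^d is modelled as row vectors 'rV[R]_d with MathComp-Analysis' (max) norm. *)

Definition Cb (R : realType) (d : nat) (phi : 'rV[R]_d -> R) : Prop :=
  continuous phi /\ exists M : R, forall x, `|phi x| <= M.

Definition borel_set (R : realType) (d : nat) (A : set 'rV[R]_d) : Prop :=
  smallest (sigma_algebra setT) (@open 'rV[R]_d) A.

Definition borel_fun (R : realType) (d : nat) (psi : 'rV[R]_d -> R) : Prop :=
  forall B : set R, measurable B -> borel_set (psi @^-1` B).

Definition nonlinear_expectation_space (R : realType) (Omega : Type)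
  (H : set (Omega -> R)) (E : (Omega -> R) -> R) : Prop :=
  [/\
      (forall X Y, H X -> H Y -> H (X \+ Y)),
      (forall (c : R) X, H X -> H (fun w => c * X w)),
      H (fun _ => 1) &
      (forall X, H X -> H (fun w => `|X w|))] /\
  (forall c : R, E (fun _ => c) = c) /\
  (forall X Y, H X -> H Y -> (forall w, Y w <= X w) -> E Y <= E X).

Definition sublinear_expectation_space (R : realType) (Omega : Type)
  (H : set (Omega -> R)) (E : (Omega -> R) -> R) : Prop :=
  [/\ nonlinear_expectation_space H E,
      (forall X Y, H X -> H Y -> E (X \+ Y) <= E X + E Y) &
      (forall (lam : R) X, 0 <= lam -> H X -> E (fun w => lam * X w) = lam * E X)].

Definition cauchy_seqR (R : realType) (u : nat -> R) : Prop :=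
  forall e : R, 0 < e -> exists N : nat, forall i j : nat,
    (N <= i)%N -> (N <= j)%N -> `|u i - u j| < e.

(* Main.v *)
Require Import Defs.
From HB Require Import structures.
From mathcomp Require Import all_boot all_order all_algebra.
From mathcomp Require Import all_classical all_reals all_analysis.
From mathcomp Require Import ring lra.
Import Order.TTheory GRing.Theory Num.Theory.
Import numFieldNormedType.Exports.
Local Open Scope classical_set_scope.
Local Open Scope ring_scope.
Lemma near_inftyE (P : nat -> Prop) : (\forall n \near \oo, P n) -> exists N, forall n, (N <= n)%N -> P n.
Proof. by case=> N _ HN; exists N => n Hn; apply: HN. Qed.

Lemma bw_cauchy (R : realType) (v : nat -> R) (B : R) :
  (forall n, `|v n| <= B) ->
  exists f : nat -> nat, {homo f : i j / (i < j)%N} /\ cauchy_seqR (v \o f).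
Proof.
move=> vB.
have bv : bounded_fun v.
  rewrite /= /bounded_near; exists B; split; first exact: num_real.
  by move=> M BM x _ /=; apply: le_trans (vB x) (ltW BM).
have [f finc cf] := bolzano_weierstrass bv.
exists f; split.
  move=> i j ij; have := finc j i; rewrite leEnat => h; by rewrite ltnNge h -ltnNge.
move=> e e0; move/cvg_ex: cf => [l /cvgrPdist_lt fl].
have /near_inftyE [N HN] := fl _ (divr_gt0 e0 (ltr0n R 2)).
exists N => i j Ni Nj.
rewrite (_ : (v \o f) i - (v \o f) j = (l - (v \o f) j) - (l - (v \o f) i)); last by rewrite /=; ring.
apply: le_lt_trans (ler_normB _ _) _.
by rewrite [e](splitr e) ltrD //; apply: HN.
Unshelve. all: by end_near.
Qed.

Fixpoint diagsq (R : realType) (sel : (nat -> R) -> nat -> nat) (u : nat -> nat -> R)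
  (k : nat) : nat -> nat :=
  match k with
  | 0 => sel (u 0%N)
  | k'.+1 => diagsq R sel u k' \o sel (u k'.+1 \o diagsq R sel u k')
  end.

Lemma homo_ge_id {f : nat -> nat} : {homo f : i j / (i < j)%N} -> forall n, (n <= f n)%N.
Proof.
move=> hf; elim=> [|n IH] //.
by apply: leq_ltn_trans IH (hf _ _ (ltnSn n)).
Qed.

Lemma diag_subseq (R : realType) (u : nat -> nat -> R) :
  (forall k, exists B, forall n, `|u k n| <= B) ->
  exists s : nat -> nat, {homo s : i j / (i < j)%N} /\
    forall k, cauchy_seqR (fun i => u k (s i)).
Proof.
move=> ub.
have [sel Hsel] : {sel : (nat -> R) -> nat -> nat & forall v,
    (exists B, forall n, `|v n| <= B) ->
    {homo sel v : i j / (i < j)%N} /\ cauchy_seqR (v \o sel v)}.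
  apply: (@choice _ _ (fun v f => (exists B, forall n, `|v n| <= B) ->
    {homo f : i j / (i < j)%N} /\ cauchy_seqR (v \o f))) => v.
  case: (pselect (exists B, forall n, `|v n| <= B)) => [[B HB]|nb].
    have [f Hf] := @bw_cauchy R v B HB; by exists f.
  by exists id => /nb.
pose sq := @diagsq R sel u.
have Hk : forall k, {homo sq k : i j / (i < j)%N} /\ cauchy_seqR (u k \o sq k).
  elim=> [|k [IHi IHc]].
    exact: Hsel (ub 0%N).
  have bv : exists B, forall n, `|(u k.+1 \o sq k) n| <= B.
    by have [B HB] := ub k.+1; exists B => n; apply: HB.
  have [si sc] := Hsel _ bv; split => //.
  by move=> i j ij; apply: IHi; apply: si.
have Hsub : forall k i, (k <= i)%N -> exists rho : nat -> nat,
    {homo rho : a b / (a < b)%N} /\ forall n, sq i n = sq k (rho n).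
  move=> k; elim=> [|i IH] ki.
    move: ki; rewrite leqn0 => /eqP ->; by exists id; split.
  case: (ltngtP k i.+1) ki => // [ki _|-> _]; last by exists id; split.
  have [rho [rh rq]] := IH ki.
  have bv : exists B, forall n, `|(u i.+1 \o sq i) n| <= B.
    by have [B HB] := ub i.+1; exists B => n; apply: HB.
  have [si _] := Hsel _ bv.
  exists (rho \o sel (u i.+1 \o sq i)); split.
    by move=> a b ab; apply: rh; apply: si.
  by move=> n; rewrite /= -rq.
exists (fun i => sq i i); split.
  apply: homo_ltn; first by move=> y x z; apply: ltn_trans.
  move=> i /=.
  have bv : exists B, forall n, `|(u i.+1 \o sq i) n| <= B.
    by have [B HB] := ub i.+1; exists B => n; apply: HB.
  have [si _] := Hsel _ bv.
  rewrite /sq /=; apply: (Hk i).1.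
  by have := homo_ge_id si i.+1.
move=> k e e0.
have [N HN] := (Hk k).2 e e0.
exists (maxn N k) => i j; rewrite !geq_max => /andP[Ni ki] /andP[Nj kj].
have [ri [rih riq]] := Hsub k i ki.
have [rj [rjh rjq]] := Hsub k j kj.
rewrite riq rjq; apply: HN.
  exact: leq_trans Ni (homo_ge_id rih i).
exact: leq_trans Nj (homo_ge_id rjh j).
Qed.
Lemma cont_borel (R : realType) (d : nat) (f : 'rV[R]_d -> R) :
  continuous f -> borel_fun f.
Proof.
move=> cf B mB.
pose T := g_sigma_algebraType (@open 'rV[R]_d).
have mf : measurable_fun (setT : set T) (f : T -> R).
  apply: (@measurability _ _ _ _ _ _ (@measurable_realfun.RGenOInfty.G R)).
    exact: measurable_realfun.RGenOInfty.measurableE.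
  move=> _ [_ [x ->] <-].
  apply: sub_sigma_algebra; rewrite setTI.
  by move/continuousP : cf; apply; exact: rray_open.
have := mf measurableT B mB; rewrite setTI; exact.
Qed.
Lemma max_lip (R : realType) (a b a' b' B : R) :
  `|a - a'| <= B -> `|b - b'| <= B -> `|Num.max a b - Num.max a' b'| <= B.
Proof.
rewrite !ler_norml => /andP[h1 h2] /andP[h3 h4].
by case: (leP a b) => ?; case: (leP a' b') => ? /=; apply/andP; split; lra.
Qed.

Lemma min_lip (R : realType) (a b a' b' B : R) :
  `|a - a'| <= B -> `|b - b'| <= B -> `|Num.min a b - Num.min a' b'| <= B.
Proof.
rewrite !ler_norml => /andP[h1 h2] /andP[h3 h4].
by case: (leP a b) => ?; case: (leP a' b') => ? /=; apply/andP; split; lra.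
Qed.

Lemma lip_cont (R : realType) (d : nat) (f : 'rV[R]_d -> R) (K : R) :
  (forall x y, `|f x - f y| <= K * `|x - y|) -> continuous f.
Proof.
move=> hf x; apply/(@cvgrPdist_lt _ _ _ (nbhs x) (nbhs_filter x)) => e e0.
have K1 : 0 < `|K| + 1 by rewrite ltr_wpDl.
apply/nbhs_ballP; exists (e / (`|K| + 1)); first by apply: divr_gt0.
move=> y; rewrite -ball_normE /= => xy.
apply: le_lt_trans (hf x y) _.
apply: le_lt_trans (ler_norm _) _.
rewrite normrM normr_id.
have : `|K| * `|x - y| <= `|K| * (e / (`|K| + 1)) by rewrite ler_wpM2l // ltW.
move=> h; apply: le_lt_trans h _.
rewrite mulrA ltr_pdivrMr //.
have := normr_ge0 K; nra.
Qed.
Definition Dt (d : nat) := (seq ('rV[int]_d * int) * nat * nat * nat)%type.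

Definition rowR {R : realType} {d : nat} (m : nat) (z : 'rV[int]_d) : 'rV[R]_d :=
  map_mx (fun k : int => k%:~R / m%:R) z.

Definition term {R : realType} {d : nat} (m L : nat) (x : 'rV[R]_d) (zq : 'rV[int]_d * int) : R :=
  zq.2%:~R / m%:R - L%:R * `|x - rowR m zq.1|.

Definition Gfun {R : realType} {d : nat} (t : Dt d) (x : 'rV[R]_d) : R :=
  Num.min (t.2%:R) (\big[Num.max/ - t.2%:R]_(zq <- t.1.1.1) term t.1.1.2 t.1.2 x zq).

Lemma bigmax_ge0 (R : realType) (I : Type) (s : seq I) (F : I -> R) (x0 : R) :
  x0 <= \big[Num.max/x0]_(i <- s) F i.
Proof.
elim: s => [|a s IH]; first by rewrite big_nil.
by rewrite big_cons le_max IH orbT.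
Qed.

Lemma term_lip {R : realType} {d : nat} (m L : nat) (zq : 'rV[int]_d * int) (x y : 'rV[R]_d) :
  `|term m L x zq - term m L y zq| <= L%:R * `|x - y|.
Proof.
rewrite /term (_ : forall a b c : R, (a - b) - (a - c) = c - b); last by move=> *; ring.
rewrite -mulrBr normrM ger0_norm // ler_wpM2l //.
apply: le_trans (ler_dist_dist _ _) _.
by rewrite opprB addrA subrK distrC.
Qed.

Lemma bigmax_lip {R : realType} {I : Type} (s : seq I) (F G : I -> R) (x0 B : R) :
  0 <= B -> (forall i, `|F i - G i| <= B) ->
  `|\big[Num.max/x0]_(i <- s) F i - \big[Num.max/x0]_(i <- s) G i| <= B.
Proof.
move=> B0 hFG; elim: s => [|a s IH]; first by rewrite !big_nil subrr normr0.
by rewrite !big_cons; apply: max_lip.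
Qed.

Lemma Gfun_prop {R : realType} {d : nat} (t : Dt d) :
  Cb (@Gfun R d t) /\ forall x, `|@Gfun R d t x| <= t.2%:R.
Proof.
have bnd : forall x, `|@Gfun R d t x| <= t.2%:R.
  move=> x; rewrite /Gfun ler_norml ge_min lexx orTb andbT.
  rewrite le_min; apply/andP; split; last exact: bigmax_ge0.
  by have := ler0n R t.2; lra.
split => //; split; last by exists t.2%:R.
apply: (@lip_cont _ _ _ t.1.2%:R) => x y.
rewrite /Gfun; apply: min_lip; first by rewrite subrr normr0 mulr_ge0.
by apply: bigmax_lip => [|i]; [rewrite mulr_ge0|exact: term_lip].
Qed.
Definition box {R : realType} {d : nat} (N : R) : set 'rV[R]_d :=
  [set v | forall i : 'I_d, `[- N, N]%classic (v ord0 i)].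

Lemma box_cover {R : realType} {d : nat} (N : R) (I : choiceType) (D : set I)
  (f : I -> set 'rV[R]_d) :
  (forall i, D i -> open (f i)) -> (@box R d N) `<=` cover D f ->
  exists s : seq I, (forall i, i \in s -> D i) /\
    (@box R d N) `<=` [set x | exists2 i, i \in s & f i x].
Proof.
move=> fo cv.
have cK : compact (@box R d N).
  by apply: (@rV_compact _ _ (fun=> `[- N, N]%classic)) => i; exact: segment_compact.
rewrite compact_cover in cK.
have [D' sub cov] := cK I D f fo cv.
exists (finmap.enum_fset D'); split; first by move=> i iD; rewrite -in_setE; apply: sub.
move=> x /cov [i /= iD fx]; by exists i.
Qed.

Lemma coord_le_norm {R : realType} {d : nat} (v : 'rV[R]_d) (i : 'I_d) :
  `|v ord0 i| <= `|v|.
Proof.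
have -> : `|v| = mx_norm v by []. rewrite mx_normrE.
exact: (le_bigmax _ (fun ij : 'I_1 * 'I_d => `|v ij.1 ij.2|) (ord0, i)).
Qed.

Lemma norm_le_coord {R : realType} {d : nat} (v : 'rV[R]_d) (r : R) :
  0 <= r -> (forall i, `|v ord0 i| <= r) -> `|v| <= r.
Proof.
move=> r0 h; have -> : `|v| = mx_norm v by []. rewrite mx_normrE.
apply: bigmax_le => // -[i j] _ /=.
by rewrite (ord1 i); exact: h.
Qed.

Lemma norm_box {R : realType} {d : nat} {N : R} {x : 'rV[R]_d} :
  `|x| <= N -> @box R d N x.
Proof.
move=> xN i /=; rewrite in_itv /= -ler_norml.
exact: le_trans (coord_le_norm x i) xN.
Qed.

Lemma bigmin_gt0 {R : realType} {I : Type} (s : seq I) (F : I -> R) (x0 : R) :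
  0 < x0 -> (forall i, 0 < F i) -> 0 < \big[Num.min/x0]_(i <- s) F i.
Proof.
move=> x00 hF; elim: s => [|a s IH]; first by rewrite big_nil.
by rewrite big_cons lt_min hF IH.
Qed.

Lemma bigmin_le_mem {R : realType} {I : eqType} (s : seq I) (F : I -> R) (x0 : R) (i : I) :
  i \in s -> \big[Num.min/x0]_(j <- s) F j <= F i.
Proof.
elim: s => [|a s IH] //; rewrite in_cons big_cons => /orP[/eqP ->|/IH h].
  by rewrite ge_min lexx.
by rewrite ge_min h orbT.
Qed.

Lemma unif_box {R : realType} {d : nat} (phi : 'rV[R]_d -> R) (N eps : R) :
  continuous phi -> 0 < eps -> exists2 del : R, 0 < del &
    forall x y, @box R d N x -> `|x - y| < del -> `|phi x - phi y| < eps.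
Proof.
move=> cphi e0.
have e20 : 0 < eps / 2 by apply: divr_gt0.
have [r Hr] : {r : 'rV[R]_d -> R & forall z, 0 < r z /\
    forall y, `|z - y| < r z -> `|phi z - phi y| < eps / 2}.
  apply: (@choice _ _ (fun z rz => 0 < rz /\
    forall y, `|z - y| < rz -> `|phi z - phi y| < eps / 2)) => z.
  have := cphi z.
  move/(@cvgrPdist_lt _ _ _ (nbhs z) (nbhs_filter z)) => /(_ (eps / 2) e20) h.
  move/nbhs_ballP: h => [r r0 hr]; exists r; split => // y zy; apply: hr.
  by rewrite -ball_normE /=.
have cv : @box R d N `<=` cover setT (fun z => ball z (r z / 2)).
  move=> x _; exists x => //; apply: ballxx; apply: divr_gt0 => //; exact: (Hr x).1.
have [s [_ cov]] := @box_cover R d N _ setT (fun z => ball z (r z / 2))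
  (fun z _ => ball_open z _) cv.
exists (\big[Num.min/1]_(z <- s) (r z / 2)).
  by apply: bigmin_gt0 => // z; apply: divr_gt0; [exact: (Hr z).1|].
move=> x y bx xy.
have [z zs zx] := cov x bx.
move: zx; rewrite -ball_normE /= => zx.
have dz := @bigmin_le_mem R _ s (fun z => r z / 2) 1 z zs.
have zy : `|z - y| < r z.
  apply: le_lt_trans (ler_distD x z y) _.
  have := lt_le_trans xy dz; lra.
have rz0 := (Hr z).1.
have h1 : `|phi z - phi x| < eps / 2 by apply: (Hr z).2; lra.
have h2 := (Hr z).2 y zy.
apply: le_lt_trans (ler_distD (phi z) (phi x) (phi y)) _.
rewrite distrC; lra.
Qed.

Definition floorrow {R : realType} {d : nat} (m : nat) (z : 'rV[R]_d) : 'rV[int]_d :=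
  map_mx (fun r => Num.floor (r * m%:R)) z.

Lemma floor_div {R : realType} (y : R) {m : nat} : (0 < m)%N ->
  0 <= y - (Num.floor (y * m%:R))%:~R / m%:R <= m%:R^-1.
Proof.
move=> m0; have mR : 0 < m%:R :> R by rewrite ltr0n.
have := floor_itv (y * m%:R); rewrite intrD.
set f := (Num.floor (y * m%:R))%:~R => /andP[h1 h2].
have -> : y - f / m%:R = (y * m%:R - f) * m%:R^-1.
  by field; rewrite pnatr_eq0 -lt0n.
apply/andP; split; first by apply: mulr_ge0; [lra|rewrite invr_ge0 ltW].
rewrite -[X in _ <= X]mul1r; apply: ler_wpM2r; [rewrite invr_ge0 ltW // | lra].
Qed.

Lemma floorrow_close {R : realType} {d : nat} (m : nat) (z : 'rV[R]_d) : (0 < m)%N ->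
  `|z - rowR m (floorrow m z)| <= m%:R^-1.
Proof.
move=> m0; apply: norm_le_coord; first by rewrite invr_ge0.
move=> i; rewrite !mxE.
have /andP[h1 h2] := floor_div (z ord0 i) m0.
by rewrite ger0_norm.
Qed.

Lemma approx {R : realType} {d : nat} (phi : 'rV[R]_d -> R) (M N eps : R) :
  Cb phi -> (forall x, `|phi x| <= M) -> 0 < eps ->
  exists t : Dt d, t.2%:R <= M + 1 /\
    forall x, `|x| <= N -> `|phi x - Gfun t x| <= eps.
Proof.
case=> cphi _ phiM e0.
have M0 : 0 <= M := le_trans (normr_ge0 _) (phiM 0).
pose e' := eps / 3.
have e'0 : 0 < e' by rewrite /e'; apply: divr_gt0.
have [del d0 HC] := unif_box phi N e' cphi e'0.
pose c := (Num.truncn M).+1.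
have [cM1 cM2] : M < c%:R /\ c%:R <= M + 1.
  have /andP[h1 h2] := truncn_itv M0.
  by split => //; rewrite /c -natr1; lra.
pose L := (Num.truncn (4 * (M + 1) / del)).+1.
have Ldel : 4 * (M + 1) < L%:R * del.
  by rewrite -ltr_pdivrMr //; apply: truncnS_gt.
have L0 : 0 <= L%:R :> R by rewrite ler0n.
pose m := (Num.truncn ((2 * L%:R + 1) / e' + 2 / del)).+1.
have mgt : (2 * L%:R + 1) / e' + 2 / del < m%:R by apply: truncnS_gt.
have m0 : (0 < m)%N by [].
have mR : 0 < m%:R :> R by rewrite ltr0n.
have F1 : (2 * L%:R + 1) / m%:R < e'.
  rewrite ltr_pdivrMr //.
  have : 0 <= 2 / del by rewrite divr_ge0 // ltW.
  move=> h; have : (2 * L%:R + 1) / e' < m%:R by lra.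
  by rewrite ltr_pdivrMr // [e' * _]mulrC.
have F2 : 2 / m%:R < del.
  rewrite ltr_pdivrMr //.
  have : 0 <= (2 * L%:R + 1) / e' by rewrite divr_ge0 // ?ltW //; lra.
  move=> h; have : 2 / del < m%:R by lra.
  by rewrite ltr_pdivrMr // [del * _]mulrC.
have F3 : m%:R^-1 = (2 / m%:R) / 2 :> R by field; rewrite pnatr_eq0 -lt0n.
have F4 : L%:R * (2 / m%:R) + m%:R^-1 = (2 * L%:R + 1) / m%:R :> R.
  by field; rewrite pnatr_eq0 -lt0n.
have mi0 : 0 < m%:R^-1 :> R by rewrite invr_gt0.
have cv : @box R d N `<=` cover setT (fun z => ball z (m%:R^-1)).
  by move=> x _; exists x => //; apply: ballxx.
have [S [_ cov]] := @box_cover R d N _ setT (fun z => ball z (m%:R^-1))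
  (fun z _ => ball_open z _) cv.
pose lst := [seq (floorrow m z, Num.floor (phi z * m%:R)) | z <- S].
exists (lst, m, L, c); split => // x xN.
have bx := norm_box xN.
have phx : - M <= phi x <= M by rewrite -ler_norml.
rewrite /Gfun /=.
set B := \big[Num.max/ - c%:R]_(zq <- lst) term m L x zq.
have up : B <= phi x + e'.
  rewrite /B big_seq; apply: bigmax_le; first lra.
  move=> _ /mapP [z zS ->]; rewrite /term /=.
  have /andP[fq1 fq2] := floor_div (phi z) m0.
  have fz := floorrow_close m z m0.
  set p := rowR m (floorrow m z).
  have phzM : `|phi z| <= M := phiM z.
  move: phzM; rewrite ler_norml => /andP[_ phzM].
  have nx0 : 0 <= `|x - p| := normr_ge0 _.
  case: (ltP `|x - p| (del / 2)) => xp.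
    have xz : `|x - z| < del.
      apply: le_lt_trans (ler_distD p x z) _.
      rewrite (distrC p z); lra.
    have := HC x z bx xz; rewrite ltr_norml => /andP[h _].
    have : 0 <= L%:R * `|x - p| by apply: mulr_ge0.
    lra.
  have : L%:R * (del / 2) <= L%:R * `|x - p| by apply: ler_wpM2l.
  lra.
have lo : phi x - 2 * e' < B.
  have [z zS] := cov x bx.
  rewrite -ball_normE /= => zx.
  have zin : (floorrow m z, Num.floor (phi z * m%:R)) \in lst by apply: map_f.
  apply: (lt_le_trans _ (le_bigmax_seq _ _ xpredT (term m L x) zin isT)).
  rewrite /term /=.
  have /andP[fq1 fq2] := floor_div (phi z) m0.
  have fz := floorrow_close m z m0.
  set p := rowR m (floorrow m z).
  have xz : `|x - z| < del by rewrite distrC; lra.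
  have := HC x z bx xz; rewrite ltr_norml => /andP[_ h].
  have xp : `|x - p| <= 2 / m%:R.
    apply: le_trans (ler_distD z x p) _; rewrite distrC; lra.
  have : L%:R * `|x - p| <= L%:R * (2 / m%:R) by apply: ler_wpM2l.
  lra.
rewrite ler_norml.
have e'E : e' * 3 = eps by rewrite /e' mulfVK // pnatr_eq0.
by case: (leP c%:R B) => h /=; apply/andP; split; lra.
Qed.
Lemma pw_borel {R : realType} {d : nat} (l : R) :
  borel_fun (fun x : 'rV[R]_d => `|x| `^ l).
Proof.
move=> B mB.
have h := @measurable_realfun.measurable_powR R l measurableT B mB; rewrite setTI in h.
have := @cont_borel R d (fun x => `|x|) (@norm_continuous R _) _ h.
by [].
Qed.

Lemma Cb_sub {R : realType} {d : nat} {phi psi : 'rV[R]_d -> R} :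
  Cb phi -> Cb psi -> continuous (fun x => phi x - psi x).
Proof.
move=> [cphi _] [cpsi _] x.
exact: (continuousB (cphi x) (cpsi x)).
Qed.

Definition Gk {R : realType} {d : nat} (k : nat) : 'rV[R]_d -> R :=
  match (unpickle k : option (Dt d)) with Some t => Gfun t | None => fun _ => 0 end.

Theorem mainTheorem2 (R : realType) (d : nat)
  (Omega : Type) (H : set (Omega -> R)) (E : (Omega -> R) -> R)
  (Alpha : Type) (X : Alpha -> Omega -> 'rV[R]_d)
  (Omegab : Type) (Hb : set (Omegab -> R)) (Eb : (Omegab -> R) -> R)
  (l : R) (Xb : Omegab -> 'rV[R]_d) :
  nonlinear_expectation_space H E ->
  (forall a phi, Cb phi -> H (phi \o X a)) ->
  sublinear_expectation_space Hb Eb ->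
  0 < l ->
  (forall i : 'I_d, Hb (fun w => Xb w ord0 i)) ->
  (forall psi : 'rV[R]_d -> R, borel_fun psi ->
     (exists c : R, forall x, `|psi x| <= c * (1 + `|x| `^ l)) ->
     Hb (psi \o Xb)) ->
  (forall a phi psi, Cb phi -> Cb psi ->
     E (phi \o X a) - E (psi \o X a) <= Eb ((phi \o Xb) \- (psi \o Xb))) ->
  forall alpha : nat -> Alpha,
  exists n : nat -> nat,
    {homo n : i j / (i < j)%N >-> (i < j)%N} /\
    forall phi, Cb phi -> cauchy_seqR (fun i => E (phi \o X (alpha (n i)))).
Proof.
move=> [[Hadd Hscal H1 Habs] [Econst Emono]] HX [[[Hbadd Hbscal Hb1 Hbabs] [Ebconst Ebmono]] Ebsub Ebhom] l0 _ Hpsi Hcmp alpha.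
have Hbc : forall c : R, Hb (fun _ => c).
  move=> c; have := Hbscal c _ Hb1.
  by rewrite (_ : (fun _ => c * 1) = (fun _ => c)) //; apply: funext => w; rewrite mulr1.
have Hc : forall c : R, H (fun _ => c).
  move=> c; have := Hscal c _ H1.
  by rewrite (_ : (fun _ => c * 1) = (fun _ => c)) //; apply: funext => w; rewrite mulr1.
have Fbnd : forall a phi B, Cb phi -> (forall x, `|phi x| <= B) -> `|E (phi \o X a)| <= B.
  move=> a phi B Cphi hB; rewrite ler_norml; apply/andP; split.
    rewrite -[X in X <= _](Econst (- B)); apply: Emono; [exact: HX|exact: Hc|].
    by move=> w /=; have := hB (X a w); rewrite ler_norml => /andP[].
  rewrite -[X in _ <= X](Econst B); apply: Emono; [exact: Hc|exact: HX|].
  by move=> w /=; have := hB (X a w); rewrite ler_norml => /andP[].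
pose pw := fun x : 'rV[R]_d => `|x| `^ l.
have Hpw : Hb (pw \o Xb).
  apply: Hpsi; first exact: pw_borel.
  exists 1 => x; rewrite mul1r /pw ger0_norm ?powR_ge0 //.
  by rewrite lerDr.
pose C := Eb (pw \o Xb).
have C0 : 0 <= C.
  rewrite -(Ebconst 0); apply: Ebmono; [exact: Hpw|exact: Hbc|] => w /=; exact: powR_ge0.
have est : forall a phi psi (Kd eps N : R), Cb phi -> Cb psi -> 0 <= Kd -> 0 <= eps -> 0 < N ->
    (forall x, `|phi x - psi x| <= Kd) ->
    (forall x, `|x| <= N -> `|phi x - psi x| <= eps) ->
    E (phi \o X a) - E (psi \o X a) <= eps + Kd / N `^ l * C.
  move=> a phi psi Kd eps N Cphi Cpsi Kd0 eps0 N0 hK heps.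
  apply: le_trans (Hcmp a phi psi Cphi Cpsi) _.
  have Nl0 : 0 < N `^ l by apply: powR_gt0.
  have c0 : 0 <= Kd / N `^ l by rewrite divr_ge0 // ltW.
  have Hg : Hb ((phi \o Xb) \- (psi \o Xb)).
    have := Hpsi (fun x => phi x - psi x) (@cont_borel R d _ (Cb_sub Cphi Cpsi)).
    apply; exists Kd => x; apply: le_trans (hK x) _.
    rewrite -[X in X <= _]mulr1 ler_wpM2l // lerDl; exact: powR_ge0.
  have Hr : Hb ((fun _ => eps) \+ (fun w => Kd / N `^ l * (pw \o Xb) w)).
    by apply: Hbadd; [exact: Hbc | exact: Hbscal].
  apply: le_trans (Ebmono _ _ Hr Hg _) _.
    move=> w /=; rewrite /pw.
    have y0 : 0 <= Kd / N `^ l * `|Xb w| `^ l by apply: mulr_ge0 => //; exact: powR_ge0.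
    have [xN|xN] := leP `|Xb w| N.
      have := heps _ xN; rewrite ler_norml => /andP[_ h]; lra.
    have := hK (Xb w); rewrite ler_norml => /andP[_ h].
    have : N `^ l <= `|Xb w| `^ l.
      apply: ge0_ler_powR; first exact: ltW.
        by rewrite nnegrE ltW.
        by rewrite nnegrE.
      exact: ltW.
    move=> hNl.
    have : Kd <= Kd / N `^ l * `|Xb w| `^ l.
      rewrite mulrAC ler_pdivlMr // ler_wpM2l //.
    lra.
  apply: le_trans (Ebsub _ _ (Hbc eps) (Hbscal _ _ Hpw)) _.
  by rewrite Ebconst Ebhom.
have estA : forall a phi psi (Kd eps N : R), Cb phi -> Cb psi -> 0 <= Kd -> 0 <= eps -> 0 < N ->
    (forall x, `|phi x - psi x| <= Kd) ->
    (forall x, `|x| <= N -> `|phi x - psi x| <= eps) ->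
    `|E (phi \o X a) - E (psi \o X a)| <= eps + Kd / N `^ l * C.
  move=> a phi psi Kd eps N Cphi Cpsi Kd0 eps0 N0 hK heps.
  rewrite ler_norml; apply/andP; split; last exact: est.
  rewrite lerNl opprB; apply: est => // x; rewrite distrC; [exact: hK|exact: heps].
have CG : forall k, Cb (@Gk R d k) /\ exists B, forall x, `|@Gk R d k x| <= B.
  move=> k; rewrite /Gk; case: (unpickle k) => [t|].
    have [h1 h2] := @Gfun_prop R d t; split => //; by exists t.2%:R.
  split; last by exists 0 => x; rewrite normr0.
  split; last by exists 0 => x; rewrite normr0.
  by apply: (@lip_cont _ _ _ 0) => x y; rewrite subrr normr0 mul0r.
pose u := fun k n => E (@Gk R d k \o X (alpha n)).
have ub : forall k, exists B, forall n, `|u k n| <= B.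
  move=> k; have [Ck [B hB]] := CG k; exists B => n; exact: Fbnd.
have [s [sh scau]] := @diag_subseq R u ub.
exists s; split => // phi Cphi e e0.
have [M phiM] := Cphi.2.
have M0 : 0 <= M := le_trans (normr_ge0 _) (phiM 0).
pose Kd := 2 * M + 1.
have Kd0 : 0 <= Kd by rewrite /Kd; lra.
pose T := 8 * Kd * C / e + 1.
have T0 : 0 < T.
  rewrite /T; have : 0 <= 8 * Kd * C / e.
    by apply: divr_ge0; [apply: mulr_ge0 => //; apply: mulr_ge0|exact: ltW].
  lra.
pose N := T `^ l^-1.
have N0 : 0 < N by apply: powR_gt0.
have NT : N `^ l = T.
  by rewrite /N -powRrM mulVf ?powRr1 ?ltW // gt_eqF.
have tail : Kd / N `^ l * C <= e / 8.
  have e80 : 0 < e / 8 by apply: divr_gt0.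
  rewrite NT mulrAC ler_pdivrMr //.
  have -> : e / 8 * T = Kd * C + e / 8.
    by rewrite /T; field; rewrite gt_eqF.
  lra.
have e80 : 0 < e / 8 by apply: divr_gt0.
have [t [tM tclose]] := @approx R d phi M N (e / 8) Cphi phiM e80.
pose k := pickle t.
have Gkt : @Gk R d k = Gfun t by rewrite /Gk /k pickleK.
have [_ [B _]] := CG k.
have CGk := (CG k).1.
have hK : forall x, `|phi x - @Gk R d k x| <= Kd.
  move=> x; rewrite Gkt; apply: le_trans (ler_normB _ _) _.
  have := (Gfun_prop t).2 x; have := phiM x; rewrite /Kd; lra.
have heps : forall x, `|x| <= N -> `|phi x - @Gk R d k x| <= e / 8.
  by move=> x xN; rewrite Gkt; exact: tclose.
have e40 : 0 < e / 4 by apply: divr_gt0.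
have [N0' HN0] := scau k (e / 4) e40.
exists N0' => i j Ni Nj.
have hi := estA (alpha (s i)) phi (@Gk R d k) Kd (e / 8) N Cphi CGk Kd0 (ltW e80) N0 hK heps.
have hj := estA (alpha (s j)) phi (@Gk R d k) Kd (e / 8) N Cphi CGk Kd0 (ltW e80) N0 hK heps.
have hij := HN0 i j Ni Nj; rewrite /u /= in hij.
set a1 := E (phi \o X (alpha (s i))) in hi *.
set a2 := E (phi \o X (alpha (s j))) in hj *.
set b1 := E (@Gk R d k \o X (alpha (s i))) in hi hij *.
set b2 := E (@Gk R d k \o X (alpha (s j))) in hj hij *.
move: hi hj hij; rewrite !ltr_norml !ler_norml => /andP[? ?] /andP[? ?] /andP[? ?].
apply/andP; split; lra.
Qed.
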